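(* $B(2)=1$, $B(3)=2$, $B(4)=4$, and $B(5)=6$.
   Context: Fix a field $\mathbb{F}$. All algebras are finite-dimensional, unital, not necessarily associative $\mathbb{F}$-algebras. For a finite generating set $S$ of an algebra $\mathcal{A}$, a word in $S$ is any product (with any bracketing) of finitely many elements of $S$; its length is the number of factors, and $1$ is a word of length $0$. $L_i(S)$ is the linear span of all words in $S$ of length at most $i$. The length of $S$ is $l(S)=\min\{k\ge0: L_k(S)=\mathcal{A}\}$, and $l(\mathcal{A})=\max\{l(S): S\text{ a finite generating set of }\mathcal{A}\}$. For a natural number $n\ge2$, $B(n)$ denotes the maximal integer $l>0$ such that for every $j\in\{1,\ldots,l\}$ there exists an algebra of dimension $n$ and length $j$. *)

(* Defs.v *)
From HB Require Import structures.
From mathcomp Require Import all_boot all_order all_algebra.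
Set Implicit Arguments. Unset Strict Implicit. Unset Printing Implicit Defensive.
Import GRing.Theory.
Local Open Scope ring_scope.

(* A unital, not necessarily associative algebra of dimension n over F,
   realised (up to isomorphism) on the coordinate space 'rV[F]_n:
   a bilinear multiplication with a two-sided identity element. *)
Record nalg (F : fieldType) (n : nat) := NAlg {
  amul : 'rV[F]_n -> 'rV[F]_n -> 'rV[F]_n;
  aone : 'rV[F]_n;
  amul_linl : forall (a : F) x y z, amul (a *: x + y) z = a *: amul x z + amul y z;
  amul_linr : forall (a : F) x y z, amul z (a *: x + y) = a *: amul z x + amul z y;
  amul1l : forall x, amul aone x = x;
  amul1r : forall x, amul x aone = x
}.

Inductive is_word (F : fieldType) (n : nat) (A : nalg F n) (S : seq 'rV[F]_n)
  : nat -> 'rV[F]_n -> Prop :=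
| word_one : is_word A S 0 (aone A)
| word_gen : forall s, s \in S -> is_word A S 1 s
| word_mul : forall (i j : nat) x y, (0 < i)%N -> (0 < j)%N ->
    is_word A S i x -> is_word A S j y -> is_word A S (i + j)%N (amul A x y).

Definition inL (F : fieldType) (n : nat) (A : nalg F n) (S : seq 'rV[F]_n)
  (k : nat) (v : 'rV[F]_n) : Prop :=
  exists (m : nat) (c : 'I_m -> F) (w : 'I_m -> 'rV[F]_n),
    (forall i, exists d, (d <= k)%N /\ is_word A S d (w i)) /\
    v = \sum_(i < m) c i *: w i.

Definition L_full (F : fieldType) (n : nat) (A : nalg F n) (S : seq 'rV[F]_n)
  (k : nat) : Prop := forall v, inL A S k v.

Definition generates (F : fieldType) (n : nat) (A : nalg F n) (S : seq 'rV[F]_n)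
  : Prop := exists k, L_full A S k.

Definition set_length (F : fieldType) (n : nat) (A : nalg F n) (S : seq 'rV[F]_n)
  (k : nat) : Prop :=
  L_full A S k /\ forall k', L_full A S k' -> (k <= k')%N.

Definition alg_length (F : fieldType) (n : nat) (A : nalg F n) (l : nat) : Prop :=
  (exists S, generates A S /\ set_length A S l) /\
  (forall S k, generates A S -> set_length A S k -> (k <= l)%N).

Definition all_lengths (F : fieldType) (n l : nat) : Prop :=
  forall j, (1 <= j <= l)%N -> exists A : nalg F n, alg_length A j.

Definition isB (F : fieldType) (n b : nat) : Prop :=
  (0 < b)%N /\ all_lengths F n b /\
  (forall l, (0 < l)%N -> all_lengths F n l -> (l <= b)%N).

(* Main.v *)
Require Import Defs.
From mathcomp Require Import all_boot all_order all_algebra.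
From mathcomp Require Import zify.
From Stdlib Require Import Classical.
Set Implicit Arguments. Unset Strict Implicit. Unset Printing Implicit Defensive.
Import GRing.Theory.
Local Open Scope ring_scope.


Definition lin_closed (F : fieldType) (n : nat) (Q : 'rV[F]_n -> Prop) :=
  Q 0 /\ forall (a : F) x y, Q x -> Q y -> Q (a *: x + y).

Lemma lin_sum (F : fieldType) (n : nat) (Q : 'rV[F]_n -> Prop) m
  (c : 'I_m -> F) (w : 'I_m -> 'rV[F]_n) :
  lin_closed Q -> (forall i, Q (w i)) -> Q (\sum_(i < m) c i *: w i).
Proof.
move=> [Q0 QD] Hw; elim/big_rec: _ => // i acc _ Hacc; exact: QD.
Qed.

Lemma inL_ind (F : fieldType) (n : nat) (A : nalg F n) S k (Q : 'rV[F]_n -> Prop) v :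
  lin_closed Q -> (forall d w, (d <= k)%N -> is_word A S d w -> Q w) ->
  inL A S k v -> Q v.
Proof.
move=> HQ Hw [m [c [w [Hwi ->]]]]; apply: lin_sum => // i.
by case: (Hwi i) => d [Hd Hdw]; exact: Hw Hdw.
Qed.

Lemma inL_lin (F : fieldType) (n : nat) (A : nalg F n) S k : lin_closed (inL A S k).
Proof.
split.
  exists 0%N, (fun _ => 0), (fun _ => 0); split; first by case.
  by rewrite big_ord0.
move=> a x y [m1 [c1 [w1 [H1 ->]]]] [m2 [c2 [w2 [H2 ->]]]].
exists (m1 + m2)%N.
exists (fun i => match split i with inl i1 => a * c1 i1 | inr i2 => c2 i2 end).
exists (fun i => match split i with inl i1 => w1 i1 | inr i2 => w2 i2 end).
split.
  by move=> i; case: (split i).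
rewrite big_split_ord /= scaler_sumr; congr (_ + _); apply: eq_bigr => i _.
  by rewrite -[lshift m2 i]/(unsplit (inl i)) unsplitK scalerA.
by rewrite -[rshift m1 i]/(unsplit (inr i)) unsplitK.
Qed.

Lemma inL_word (F : fieldType) (n : nat) (A : nalg F n) S k d w :
  (d <= k)%N -> is_word A S d w -> inL A S k w.
Proof.
move=> Hd Hw; exists 1%N, (fun _ => 1), (fun _ => w); split.
  by move=> _; exists d.
by rewrite big_ord1 scale1r.
Qed.

Lemma inL_mono (F : fieldType) (n : nat) (A : nalg F n) S a b v :
  (a <= b)%N -> inL A S a v -> inL A S b v.
Proof.
move=> Hab; apply: inL_ind; first exact: inL_lin.
move=> d w Hd; apply: inL_word; exact: leq_trans Hab.
Qed.

Lemma amul0l (F : fieldType) (n : nat) (A : nalg F n) z : amul A 0 z = 0.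
Proof.
have := amul_linl A 1 0 0 z; rewrite !scale1r addr0 => H.
by apply: (@addrI _ (amul A 0 z)); rewrite addr0 -H.
Qed.

Lemma amul0r (F : fieldType) (n : nat) (A : nalg F n) z : amul A z 0 = 0.
Proof.
have := amul_linr A 1 0 0 z; rewrite !scale1r addr0 => H.
by apply: (@addrI _ (amul A z 0)); rewrite addr0 -H.
Qed.

Lemma amul_suml (F : fieldType) (n : nat) (A : nalg F n) m (c : 'I_m -> F) w y :
  amul A (\sum_(i < m) c i *: w i) y = \sum_(i < m) c i *: amul A (w i) y.
Proof.
elim/big_rec2: _ => [|i a b _ <-]; first exact: amul0l.
by rewrite amul_linl.
Qed.

Lemma amul_sumr (F : fieldType) (n : nat) (A : nalg F n) m (c : 'I_m -> F) w y :
  amul A y (\sum_(i < m) c i *: w i) = \sum_(i < m) c i *: amul A y (w i).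
Proof.
elim/big_rec2: _ => [|i a b _ <-]; first exact: amul0r.
by rewrite amul_linr.
Qed.

Lemma word0 (F : fieldType) (n : nat) (A : nalg F n) S w :
  is_word A S 0 w -> w = aone A.
Proof.
suff: forall d, d = 0%N -> is_word A S d w -> w = aone A by apply.
move=> d Ed H; case: H Ed => // i j x y Hi Hj _ _ E; lia.
Qed.

Lemma word_mul' (F : fieldType) (n : nat) (A : nalg F n) S a b x y :
  is_word A S a x -> is_word A S b y -> is_word A S (a + b) (amul A x y).
Proof.
case: a => [|a] Hx; first by rewrite (word0 Hx) amul1l.
case: b => [|b] Hy; first by rewrite (word0 Hy) amul1r addn0.
exact: word_mul.
Qed.

Lemma inL_mul (F : fieldType) (n : nat) (A : nalg F n) S a b x y :
  inL A S a x -> inL A S b y -> inL A S (a + b) (amul A x y).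
Proof.
move=> [m [c [w [Hw ->]]]] Hy; rewrite amul_suml; apply: lin_sum; first exact: inL_lin.
move=> i; case: (Hw i) => d [Hd Hwd].
move: Hy => [m' [c' [w' [Hw' ->]]]]; rewrite amul_sumr; apply: lin_sum; first exact: inL_lin.
move=> j; case: (Hw' j) => d' [Hd' Hwd'].
apply: (inL_word _ (word_mul' Hwd Hwd')); exact: leq_add.
Qed.

Lemma word_inv (F : fieldType) (n : nat) (A : nalg F n) S d w :
  is_word A S d w -> (2 <= d)%N -> exists i j x y, (0 < i)%N /\ (0 < j)%N /\ (i + j = d)%N /\
    is_word A S i x /\ is_word A S j y /\ w = amul A x y.
Proof.
case=> //; move=> i j x y Hi Hj Hx Hy _; exists i, j, x, y; do !split => //.
Qed.

Lemma inL_transfer (F : fieldType) (n : nat) (A : nalg F n) S T k v :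
  (forall t, t \in T -> inL A S 1 t) -> inL A T k v -> inL A S k v.
Proof.
move=> HT; apply: inL_ind; first exact: inL_lin.
move=> d w Hd Hw; apply: (inL_mono Hd).
elim: Hw => {d w Hd}.
- by apply: (inL_word (leqnn 0)); constructor.
- by move=> s /HT.
- by move=> i j x y _ _ _ Hx _ Hy; apply: inL_mul.
Qed.


Lemma span_in (F : fieldType) (n : nat) (Q : 'rV[F]_n -> Prop) (s : seq 'rV[F]_n) v :
  lin_closed Q -> (forall x, x \in s -> Q x) -> v \in <<s>>%VS -> Q v.
Proof.
move=> HQ Hs Hv.
have Hv' : v \in <<in_tuple s>>%VS by [].
rewrite (coord_span Hv'); apply: lin_sum => // i.
apply: Hs; apply: mem_nth; exact: ltn_ord.
Qed.

Lemma free_step (F : fieldType) (n : nat) (Q Q' : 'rV[F]_n -> Prop) (s : seq 'rV[F]_n) :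
  lin_closed Q -> (forall v, Q v -> Q' v) -> ~ (forall v, Q' v -> Q v) ->
  free s -> (forall x, x \in s -> Q x) ->
  exists s', [/\ free s', (forall x, x \in s' -> Q' x) & size s' = (size s).+1].
Proof.
move=> HQ HQQ' Hn Hf Hs.
have [v [Hv' Hv]] : exists v, Q' v /\ ~ Q v.
  apply: NNPP => H; apply: Hn => v Hv'; apply: NNPP => Hv; apply: H; by exists v.
exists (v :: s); split => //.
- rewrite free_cons Hf andbT; apply/negP => Hsp; apply: Hv; exact: span_in Hsp.
- by move=> x; rewrite inE => /orP [/eqP -> | /Hs /HQQ'].
Qed.

Lemma free_size (F : fieldType) (n : nat) (s : seq 'rV[F]_n) : free s -> (size s <= n)%N.
Proof.
rewrite /free => /eqP <-.
have := dimvS (subvf <<s>>%VS); rewrite dimvf /dim /= mul1n //.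
Qed.

Lemma chain_free (F : fieldType) (n : nat) (Q : nat -> 'rV[F]_n -> Prop) r :
  (forall k, lin_closed (Q k)) -> (forall k v, (k < r)%N -> Q k v -> Q k.+1 v) ->
  (forall k, (k < r)%N -> ~ (forall v, Q k.+1 v -> Q k v)) ->
  (exists v, Q 0%N v /\ v <> 0) -> (r.+1 <= n)%N.
Proof.
move=> Hlin Hmono Hstep [v [Hv Hv0]].
suff: forall k, (k <= r)%N -> exists s, [/\ free s, (forall x, x \in s -> Q k x) & size s = k.+1].
  by move=> /(_ r (leqnn r)) [s [Hf _ <-]]; exact: free_size.
elim=> [|k IH] Hk.
  exists [:: v]; split => //; first by rewrite seq1_free; apply/eqP.
  by move=> x; rewrite inE => /eqP ->.
have [s [Hf Hs Hsz]] := IH (ltnW Hk).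
have [s' [Hf' Hs' Hsz']] := free_step (Hlin k) (Hmono k^~ Hk) (Hstep k Hk) Hf Hs.
by exists s'; rewrite Hsz' Hsz.
Qed.

Lemma aone_neq0 (F : fieldType) (n : nat) (A : nalg F n.+1) : aone A <> 0.
Proof.
move=> H; have := amul1l A (delta_mx 0 0); rewrite H amul0l => /matrixP /(_ 0 0).
by rewrite !mxE /= => /eqP; rewrite eq_sym oner_eq0.
Qed.

Lemma SL (F : fieldType) (n : nat) (A : nalg F n) S j :
  (forall v, inL A S (maxn (2 * j) j.+1) v -> inL A S j v) ->
  forall m v, inL A S m v -> inL A S j v.
Proof.
move=> H m; elim: m {-2}m (leqnn m) => [|M IH] m Hm v.
  by move: Hm; rewrite leqn0 => /eqP ->; apply: inL_mono.
case: (leqP m (maxn (2 * j) j.+1)) => Hmj.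
  by move=> Hv; apply: H; exact: inL_mono Hv.
apply: inL_ind; first exact: inL_lin.
move=> d w Hd Hw.
case: (ltnP d m) => Hdm.
  apply: (IH d); [lia | exact: inL_word Hw].
have Hdm' : d = m by lia.
have [i [j' [x [y [Hi [Hj [Hij [Hx [Hy ->]]]]]]]]] := word_inv Hw (ltac:(lia)).
case: (ltnP j i) => Hji.
  have Hx' : inL A S j x by apply: (IH i); [lia | exact: inL_word Hx].
  have := inL_mul Hx' (inL_word (leqnn j') Hy); apply: IH; lia.
case: (ltnP j j') => Hjj.
  have Hy' : inL A S j y by apply: (IH j'); [lia | exact: inL_word Hy].
  have := inL_mul (inL_word (leqnn i) Hx) Hy'; apply: IH; lia.
lia.
Qed.

Lemma step_fact (F : fieldType) (n : nat) (A : nalg F n) S l j :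
  set_length A S l -> (j < l)%N ->
  ~ (forall v, inL A S (maxn (2 * j) j.+1) v -> inL A S j v).
Proof.
move=> [Hfull Hmin] Hjl H.
have : L_full A S j by move=> v; apply: (SL H); exact: Hfull.
move=> /Hmin; lia.
Qed.

Lemma last_fact (F : fieldType) (n : nat) (A : nalg F n) S l :
  set_length A S l.+1 -> ~ (forall v, inL A S l.+1 v -> inL A S l v).
Proof.
move=> [Hfull Hmin] H.
have : L_full A S l by move=> v; apply: H; exact: Hfull.
move=> /Hmin; lia.
Qed.


Lemma chain_idx (F : fieldType) (n : nat) (A : nalg F n.+1) S (idx : seq nat) :
  (forall k, (k < (size idx).-1)%N -> (nth 0 idx k <= nth 0 idx k.+1)%N) ->
  nth 0 idx 0 = 0%N ->
  (forall k, (k < (size idx).-1)%N ->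
     ~ (forall v, inL A S (nth 0 idx k.+1) v -> inL A S (nth 0 idx k) v)) ->
  ((size idx).-1.+1 <= n.+1)%N.
Proof.
move=> Hm H0 Hs.
apply: (@chain_free F n.+1 (fun k => inL A S (nth 0%N idx k))).
- move=> k; exact: inL_lin.
- by move=> k v Hk; apply: inL_mono; apply: Hm.
- exact: Hs.
- exists (aone A); split; last exact: aone_neq0.
  rewrite H0; apply: (inL_word (leqnn 0)); constructor.
Qed.

Lemma nsub (F : fieldType) (n : nat) (A : nalg F n) S a b a' b' :
  ~ (forall v, inL A S b v -> inL A S a v) -> (a' <= a)%N -> (b <= b')%N ->
  ~ (forall v, inL A S b' v -> inL A S a' v).
Proof.
move=> H Ha Hb H'; apply: H => v Hv; apply: (inL_mono Ha); apply: H'.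
exact: inL_mono Hv.
Qed.

Lemma noLen2 (F : fieldType) (A : nalg F 2) S : ~ set_length A S 2.
Proof.
move=> Hl.
have H0 := step_fact Hl (isT : (0 < 2)%N).
have H1 := last_fact Hl.
suff: (3 <= 2)%N by [].
apply: (@chain_idx F 1 A S [:: 0; 1; 2]%N) => //; by move=> [|[|k]].
Qed.

Lemma noLen3 (F : fieldType) (A : nalg F 3) S : ~ set_length A S 3.
Proof.
move=> Hl.
have H0 := step_fact Hl (isT : (0 < 3)%N).
have H1 := step_fact Hl (isT : (1 < 3)%N).
have H2 := last_fact Hl.
suff: (4 <= 3)%N by [].
apply: (@chain_idx F 2 A S [:: 0; 1; 2; 3]%N) => //; by move=> [|[|[|k]]].
Qed.

Lemma noLen4 (F : fieldType) (A : nalg F 4) S : ~ set_length A S 5.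
Proof.
move=> Hl.
have H0 := step_fact Hl (isT : (0 < 5)%N).
have H1 := step_fact Hl (isT : (1 < 5)%N).
have H2 := step_fact Hl (isT : (2 < 5)%N).
have H3 := last_fact Hl.
suff: (5 <= 4)%N by [].
apply: (@chain_idx F 3 A S [:: 0; 1; 2; 4; 5]%N) => //; by move=> [|[|[|[|k]]]].
Qed.

Lemma noLen5 (F : fieldType) (A : nalg F 5) S : ~ set_length A S 7.
Proof.
move=> Hl.
have H0 : ~ (forall v, inL A S 1 v -> inL A S 0 v) := step_fact Hl (isT : (0 < 7)%N).
have H1 : ~ (forall v, inL A S 2 v -> inL A S 1 v) := step_fact Hl (isT : (1 < 7)%N).
have H2 : ~ (forall v, inL A S 4 v -> inL A S 2 v) := step_fact Hl (isT : (2 < 7)%N).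
have H3 : ~ (forall v, inL A S 6 v -> inL A S 3 v) := step_fact Hl (isT : (3 < 7)%N).
have H6 : ~ (forall v, inL A S 7 v -> inL A S 6 v) := last_fact Hl.
have E32 : forall v, inL A S 3 v -> inL A S 2 v.
  apply: NNPP => Hn.
  suff: (6 <= 5)%N by [].
  apply: (@chain_idx F 4 A S [:: 0; 1; 2; 3; 6; 7]%N) => //; first by move=> [|[|[|[|[|k]]]]].
  by move=> [|[|[|[|[|k]]]]].
have E54 : forall v, inL A S 5 v -> inL A S 4 v.
  apply: NNPP => Hn.
  suff: (6 <= 5)%N by [].
  apply: (@chain_idx F 4 A S [:: 0; 1; 2; 4; 5; 7]%N) => //; first by move=> [|[|[|[|[|k]]]]].
  move=> [|[|[|[|[|k]]]]] //= _.
  exact: nsub H6 _ _.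
have E65 : forall v, inL A S 6 v -> inL A S 5 v.
  apply: NNPP => Hn.
  suff: (6 <= 5)%N by [].
  apply: (@chain_idx F 4 A S [:: 0; 1; 2; 4; 6; 7]%N) => //; first by move=> [|[|[|[|[|k]]]]].
  move=> [|[|[|[|[|k]]]]] //= _.
  exact: nsub Hn _ _.
have R : forall a v, (0 < a < 7)%N -> inL A S a v ->
   inL A S (nth 0%N [:: 0; 1; 2; 2; 4; 4; 4]%N a) v.
  move=> [|[|[|[|[|[|[|a]]]]]]] v //= _ Hv.
  - by apply: E32.
  - by apply: E54.
  - by apply: E54; apply: E65.
apply: H6 => v; apply: inL_ind; first exact: inL_lin.
move=> d w Hd Hw; case: (ltnP d 7) => Hd7.
  apply: inL_word Hw; lia.
have [i [j [x [y [Hi [Hj [Hij [Hx [Hy ->]]]]]]]]] := word_inv Hw (ltac:(lia)).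
have Hx' := R i x ltac:(lia) (inL_word (leqnn i) Hx).
have Hy' := R j y ltac:(lia) (inL_word (leqnn j) Hy).
apply: (inL_mono _ (inL_mul Hx' Hy')).
have E : (i + j = 7)%N by lia.
move: Hi Hj E {Hx Hx' Hy Hy' Hij}; case: i => [|[|[|[|[|[|[|i]]]]]]] //=;
 case: j => [|[|[|[|[|[|[|j]]]]]]] //=; lia.
Qed.


Definition gdelta (F : fieldType) m (i : 'I_m.+1) : 'rV[F]_m.+1 := delta_mx 0 i.

Definition gtab (dg : nat -> nat) m (p q : nat) : nat :=
  find (fun k => dg k == (dg p + dg q)%N) (iota 0 m.+1).

Definition gE (F : fieldType) m (dg : nat -> nat) (i j : 'I_m.+1) : 'rV[F]_m.+1 :=
  if i == ord0 then gdelta F j else if j == ord0 then gdelta F i else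
  let k := gtab dg m i j in
  if (k < m.+1)%N && (dg k == dg i + dg j)%N then gdelta F (inord k) else 0.

Definition gmul (F : fieldType) m (dg : nat -> nat) (x y : 'rV[F]_m.+1) : 'rV[F]_m.+1 :=
  \sum_(i < m.+1) \sum_(j < m.+1) (x 0 i * y 0 j) *: gE F dg i j.

Lemma gmul_linl (F : fieldType) m dg (a : F) (x y z : 'rV[F]_m.+1) :
  gmul dg (a *: x + y) z = a *: gmul dg x z + gmul dg y z.
Proof.
rewrite /gmul scaler_sumr -big_split; apply: eq_bigr => i _.
rewrite scaler_sumr -big_split; apply: eq_bigr => j _.
by rewrite !mxE mulrDl scalerDl scalerA mulrA.
Qed.

Lemma gmul_linr (F : fieldType) m dg (a : F) (x y z : 'rV[F]_m.+1) :
  gmul dg z (a *: x + y) = a *: gmul dg z x + gmul dg z y.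
Proof.
rewrite /gmul scaler_sumr -big_split; apply: eq_bigr => i _.
rewrite scaler_sumr -big_split; apply: eq_bigr => j _.
by rewrite !mxE mulrDr scalerDl scalerA mulrCA.
Qed.

Lemma gdeltaE (F : fieldType) m (i k : 'I_m.+1) : (gdelta F i) 0 k = (k == i)%:R.
Proof. by rewrite /gdelta mxE eqxx. Qed.

Lemma gmul_delta (F : fieldType) m dg (p q : 'I_m.+1) :
  gmul dg (gdelta F p) (gdelta F q) = gE F dg p q.
Proof.
rewrite /gmul (bigD1 p) //= [X in _ + X]big1 => [|i Hi]; last first.
  by apply: big1 => j _; rewrite gdeltaE (negbTE Hi) mul0r scale0r.
rewrite addr0 (bigD1 q) //= [X in _ + X]big1 => [|j Hj]; last first.
  by rewrite !gdeltaE (negbTE Hj) eqxx mulr0 scale0r.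
by rewrite !gdeltaE !eqxx mulr1 scale1r addr0.
Qed.

Lemma gmul1l (F : fieldType) m dg (x : 'rV[F]_m.+1) : gmul dg (gdelta F ord0) x = x :> 'rV[F]_m.+1.
Proof.
rewrite /gmul (bigD1 ord0) //= [X in _ + X]big1 => [|i Hi]; last first.
  by apply: big1 => j _; rewrite gdeltaE (negbTE Hi) mul0r scale0r.
rewrite addr0 [RHS]row_sum_delta; apply: eq_bigr => j _.
by rewrite gdeltaE eqxx mul1r /gE eqxx.
Qed.

Lemma gmul1r (F : fieldType) m dg (x : 'rV[F]_m.+1) : gmul dg x (gdelta F ord0) = x :> 'rV[F]_m.+1.
Proof.
rewrite /gmul [RHS]row_sum_delta; apply: eq_bigr => i _.
rewrite (bigD1 ord0) //= [X in _ + X]big1 => [|j Hj]; last first.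
  by rewrite gdeltaE (negbTE Hj) mulr0 scale0r.
rewrite addr0 gdeltaE eqxx mulr1 /gE eqxx.
by case: eqP => [-> | _].
Qed.

Definition galg (F : fieldType) m (dg : nat -> nat) : nalg F m.+1 :=
  NAlg (@gmul_linl F m dg) (@gmul_linr F m dg) (@gmul1l F m dg) (@gmul1r F m dg).

Lemma gE_ent (F : fieldType) m dg (i j k : 'I_m.+1) : dg 0%N = 0%N ->
  (gE F dg i j) 0 k != 0 -> dg k = (dg i + dg j)%N.
Proof.
move=> H0; rewrite /gE.
case: (eqVneq i ord0) => [-> | Hi].
  rewrite gdeltaE /= H0; case: (eqVneq k j) => [-> //|_]; by rewrite eqxx.
case: (eqVneq j ord0) => [-> | Hj].
  rewrite gdeltaE /= H0 addn0; case: (eqVneq k i) => [-> //|_]; by rewrite eqxx.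
case: ifP => [/andP [Hk /eqP Hd] | _]; last by rewrite mxE eqxx.
rewrite gdeltaE; case: (eqVneq k (inord (gtab dg m i j))) => [-> _ | _]; last by rewrite eqxx.
by rewrite inordK.
Qed.

Lemma gmul_ent (F : fieldType) m dg (x y : 'rV[F]_m.+1) k : dg 0%N = 0%N ->
  (gmul dg x y) 0 k != 0 ->
  exists i j, [/\ x 0 i != 0, y 0 j != 0 & dg k = (dg i + dg j)%N].
Proof.
move=> H0 Hnz; apply: NNPP => Hne; move: Hnz; rewrite /gmul summxE big1 ?eqxx //.
move=> i _; rewrite summxE big1 // => j _; rewrite mxE.
case: (eqVneq (x 0 i) 0) => [-> | Hx]; first by rewrite !(mul0r, mulr0).
case: (eqVneq (y 0 j) 0) => [-> | Hy]; first by rewrite !(mul0r, mulr0).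
case: (eqVneq ((gE F dg i j) 0 k) 0) => [-> | HE]; first by rewrite mulr0.
by exfalso; apply: Hne; exists i, j; split; [exact: Hx | exact: Hy | exact: gE_ent H0 HE].
Qed.


Definition Plo (F : fieldType) m (dg : nat -> nat) a (v : 'rV[F]_m.+1) :=
  forall i : 'I_m.+1, v 0 i != 0 -> (a <= dg i)%N.
Definition Pup (F : fieldType) m (dg : nat -> nat) b (v : 'rV[F]_m.+1) :=
  forall i : 'I_m.+1, v 0 i != 0 -> (dg i <= b)%N.

Lemma Plo_mul (F : fieldType) m dg a c (x y : 'rV[F]_m.+1) : dg 0%N = 0%N ->
  Plo dg a x -> Plo dg c y -> Plo dg (a + c) (gmul dg x y).
Proof.
move=> H0 Hx Hy k /(gmul_ent H0) [i [j [Hxi Hyj ->]]].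
exact: leq_add (Hx _ Hxi) (Hy _ Hyj).
Qed.

Lemma Pup_mul (F : fieldType) m dg a c (x y : 'rV[F]_m.+1) : dg 0%N = 0%N ->
  Pup dg a x -> Pup dg c y -> Pup dg (a + c) (gmul dg x y).
Proof.
move=> H0 Hx Hy k /(gmul_ent H0) [i [j [Hxi Hyj ->]]].
exact: leq_add (Hx _ Hxi) (Hy _ Hyj).
Qed.

Lemma ord_neq0 m (i : 'I_m.+1) : (i != ord0) = (0 < i)%N.
Proof. by rewrite lt0n; congr negb; apply/eqP/eqP => [->|H] //; apply: val_inj. Qed.

Lemma galg_upper (F : fieldType) m (dg : nat -> nat) top :
  dg 0%N = 0%N -> all (fun i => 0 < dg i <= top)%N (iota 1 m) ->
  forall (S : seq 'rV[F]_m.+1) k, generates (galg F m dg) S ->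
    set_length (galg F m dg) S k -> (k <= top)%N.
Proof.
move=> H0 /allP Hpos S k [k0 Hk0] [_ Hmin]; apply: Hmin.
have Hdg : forall i : 'I_m.+1, i != ord0 -> (0 < dg i <= top)%N.
  move=> i; rewrite ord_neq0 => Hi; apply: Hpos; rewrite mem_iota; have := ltn_ord i; lia.
set A := galg F m dg.
set S' := [seq s - s 0 ord0 *: gdelta F ord0 | s : 'rV[F]_m.+1 <- S].
have HS'lo : forall t, t \in S' -> Plo dg 1 t.
  move=> t /mapP [s Hs ->] i; rewrite !mxE eqxx /=.
  case: (eqVneq i ord0) => [-> | Hi]; first by rewrite mulr1 subrr eqxx.
  by move=> _; case/andP: (Hdg i Hi).
have Hw : forall d w, is_word A S' d w -> Plo dg d w.
  move=> d w; elim => {d w}.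
  - by move=> i _.
  - exact: HS'lo.
  - move=> i j x y _ _ _ Hx _ Hy; exact: Plo_mul.
have Hz : forall d w, is_word A S' d w -> (top < d)%N -> w = 0.
  move=> d w /Hw Hl Hd; apply/rowP => i; rewrite mxE.
  apply/eqP; apply: contraT => /Hl Hi.
  case: (eqVneq i ord0) => [Ei | Ei].
    by move: Hi; rewrite Ei H0; lia.
  by case/andP: (Hdg i Ei) => _ Hi'; lia.
have T1 : forall t, t \in S' -> inL A S 1 t.
  move=> t /mapP [s Hs ->]; rewrite addrC -scaleNr.
  apply: (proj2 (inL_lin A S 1)).
    apply: (inL_word (leq0n 1)); exact: word_one.
  apply: (inL_word (leqnn 1)); exact: word_gen.
have T2 : forall s, s \in S -> inL A S' 1 s.
  move=> s Hs; have -> : s = s 0 ord0 *: aone A + (s - s 0 ord0 *: gdelta F ord0).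
    by rewrite /= addrC subrK.
  apply: (proj2 (inL_lin A S' 1)).
    apply: (inL_word (leq0n 1)); exact: word_one.
  apply: (inL_word (leqnn 1)); apply: word_gen; exact: map_f.
move=> v; apply: (inL_transfer T1).
have := inL_transfer T2 (Hk0 v); apply: inL_ind; first exact: inL_lin.
move=> d w Hd Hdw; case: (leqP d top) => Hdt.
  exact: inL_word Hdw.
rewrite (Hz _ _ Hdw Hdt); exact: (proj1 (inL_lin A S' top)).
Qed.

Lemma gE_eq (F : fieldType) m (dg : nat -> nat) (p q : nat) (i : 'I_m.+1) :
  (0 < p < m.+1)%N -> (0 < q < m.+1)%N -> gtab dg m p q = i -> dg i = (dg p + dg q)%N ->
  gE F dg (inord p) (inord q) = gdelta F i.
Proof.
move=> /andP [Hp0 Hp] /andP [Hq0 Hq] Ht Hd.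
rewrite /gE ifF; last by apply/negbTE; rewrite ord_neq0 inordK.
rewrite ifF; last by apply/negbTE; rewrite ord_neq0 inordK.
by rewrite !inordK // Ht ltn_ord Hd eqxx /= inord_val.
Qed.

Lemma galg_lower (F : fieldType) m (dg : nat -> nat) top :
  dg 0%N = 0%N -> all (fun i => 0 < dg i <= top)%N (iota 1 m) ->
  has (fun i => dg i == top) (iota 0 m.+1) ->
  all (fun i => (dg i == 1%N) || has (fun p => has (fun q =>
     (gtab dg m p q == i) && (dg i == dg p + dg q)%N) (iota 1 m)) (iota 1 m)) (iota 1 m) ->
  exists S : seq 'rV[F]_m.+1, generates (galg F m dg) S /\ set_length (galg F m dg) S top.
Proof.
move=> H0 /allP Hpos /hasP [t Ht /eqP Htop] /allP Hwit.
have Hdg : forall i : 'I_m.+1, i != ord0 -> (0 < dg i <= top)%N.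
  move=> i; rewrite ord_neq0 => Hi; apply: Hpos; rewrite mem_iota; have := ltn_ord i; lia.
have Hdgt : forall i : 'I_m.+1, (dg i <= top)%N.
  move=> i; case: (eqVneq i ord0) => [-> | Hi]; first by rewrite /= H0.
  by case/andP: (Hdg i Hi).
set A := galg F m dg.
set S := [seq gdelta F i | i <- [seq i : 'I_m.+1 <- enum 'I_m.+1 | dg i == 1%N]].
have W : forall d (i : 'I_m.+1), dg i = d -> is_word A S (dg i) (gdelta F i).
  elim/ltn_ind => d IH i Hd.
  case: (eqVneq i ord0) => [-> | Hi].
    rewrite /= H0; exact: word_one.
  have Him : ((i : nat) \in iota 1 m).
    rewrite mem_iota; move: Hi; rewrite ord_neq0 => Hi; have := ltn_ord i; rewrite /=; lia.
  case/orP: (Hwit _ Him) => [/eqP H1 | /hasP [p Hp /hasP [q Hq /andP [/eqP Htab /eqP Hdi]]]].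
    rewrite H1; apply: word_gen; apply: map_f; rewrite mem_filter H1 eqxx /=; exact: mem_enum.
  move: Hp Hq; rewrite !mem_iota => Hp Hq.
  have Hp' : (0 < p < m.+1)%N by lia.
  have Hq' : (0 < q < m.+1)%N by lia.
  have Ep : dg (inord p : 'I_m.+1) = dg p by rewrite inordK //; lia.
  have Eq : dg (inord q : 'I_m.+1) = dg q by rewrite inordK //; lia.
  have Pp : (0 < dg p)%N.
    have Hne : (inord p : 'I_m.+1) != ord0 by rewrite ord_neq0 inordK //; lia.
    by rewrite -Ep; case/andP: (Hdg _ Hne).
  have Pq : (0 < dg q)%N.
    have Hne : (inord q : 'I_m.+1) != ord0 by rewrite ord_neq0 inordK //; lia.
    by rewrite -Eq; case/andP: (Hdg _ Hne).
  have Hpd : (dg p < d)%N.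
    lia.
  have Hqd : (dg q < d)%N by lia.
  have Wp := IH (dg p) Hpd (inord p) Ep.
  have Wq := IH (dg q) Hqd (inord q) Eq.
  have := word_mul' Wp Wq; rewrite Ep Eq -Hdi.
  by rewrite /= gmul_delta (@gE_eq F m dg p q i Hp' Hq' Htab Hdi).
have Hfull : L_full A S top.
  move=> v; rewrite [v]row_sum_delta; apply: lin_sum; first exact: inL_lin.
  move=> i; exact: inL_word (Hdgt i) (W _ i erefl).
exists S; split; first by exists top.
split => // k' Hk'; rewrite leqNgt; apply/negP => Hlt.
have Htm : (t < m.+1)%N by move: Ht; rewrite mem_iota; lia.
set t' : 'I_m.+1 := inord t.
have Et' : dg t' = top by rewrite /t' inordK.
have Hup : forall d w, is_word A S d w -> Pup dg d w.
  move=> d w; elim => {d w}.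
  - move=> i; rewrite /= mxE /=; case: (eqVneq i ord0) => [-> | Hi]; first by rewrite /= H0.
    by rewrite eqxx.
  - move=> s /mapP [i]; rewrite mem_filter => /andP [/eqP Hi _] -> j.
    rewrite gdeltaE; case: (eqVneq j i) => [-> | _]; first by rewrite Hi.
    by rewrite eqxx.
  - move=> i j x y _ _ _ Hx _ Hy; exact: Pup_mul.
have : (gdelta F t') 0 t' = 0.
  apply: (inL_ind (Q := fun v : 'rV[F]_m.+1 => v 0 t' = 0) _ _ (Hk' (gdelta F t'))).
    split; first by rewrite mxE.
    by move=> a x y Hx Hy; rewrite !mxE Hx Hy mulr0 addr0.
  move=> d w Hd /Hup Hw; apply/eqP; apply: contraT => /Hw; lia.
by rewrite gdeltaE eqxx => /eqP; rewrite oner_eq0.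
Qed.

Lemma galg_length (F : fieldType) m (dg : nat -> nat) top :
  dg 0%N = 0%N -> all (fun i => 0 < dg i <= top)%N (iota 1 m) ->
  has (fun i => dg i == top) (iota 0 m.+1) ->
  all (fun i => (dg i == 1%N) || has (fun p => has (fun q =>
     (gtab dg m p q == i) && (dg i == dg p + dg q)%N) (iota 1 m)) (iota 1 m)) (iota 1 m) ->
  alg_length (galg F m dg) top.
Proof.
move=> H0 Hpos Htop Hwit; split; first exact: galg_lower.
exact: galg_upper.
Qed.

Local Close Scope ring_scope.

Lemma isB_of (F : fieldType) n b : (0 < b)%N ->
  (forall j, (1 <= j <= b)%N -> exists A : nalg F n, alg_length A j) ->
  (forall (A : nalg F n) S, ~ set_length A S b.+1) -> isB F n b.
Proof.
move=> Hb Hall Hno; split => //; split => // l Hl Hl'.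
rewrite leqNgt; apply/negP => Hlt.
have [A [[S [_ HS]] _]] := Hl' b.+1 ltac:(lia).
exact: Hno HS.
Qed.

Ltac galg_tac m l top :=
  exists (galg _ m (fun k => nth 0%N l k)); apply: (@galg_length _ m _ top); by [].

Theorem proposition4p9 (F : fieldType) :
  isB F 2 1 /\ isB F 3 2 /\ isB F 4 4 /\ isB F 5 6.
Proof.
split; [|split; [|split]].
- apply: isB_of => //; last exact: noLen2.
  move=> [|[|j]] // _; galg_tac 1 [:: 0; 1]%N 1%N.
- apply: isB_of => //; last exact: noLen3.
  move=> [|[|[|j]]] // _.
  + galg_tac 2 [:: 0; 1; 1]%N 1%N.
  + galg_tac 2 [:: 0; 1; 2]%N 2%N.
- apply: isB_of => //; last exact: noLen4.
  move=> [|[|[|[|[|j]]]]] // _.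
  + galg_tac 3 [:: 0; 1; 1; 1]%N 1%N.
  + galg_tac 3 [:: 0; 1; 1; 2]%N 2%N.
  + galg_tac 3 [:: 0; 1; 2; 3]%N 3%N.
  + galg_tac 3 [:: 0; 1; 2; 4]%N 4%N.
- apply: isB_of => //; last exact: noLen5.
  move=> [|[|[|[|[|[|[|j]]]]]]] // _.
  + galg_tac 4 [:: 0; 1; 1; 1; 1]%N 1%N.
  + galg_tac 4 [:: 0; 1; 1; 1; 2]%N 2%N.
  + galg_tac 4 [:: 0; 1; 1; 2; 3]%N 3%N.
  + galg_tac 4 [:: 0; 1; 2; 3; 4]%N 4%N.
  + galg_tac 4 [:: 0; 1; 2; 4; 5]%N 5%N.
  + galg_tac 4 [:: 0; 1; 2; 4; 6]%N 6%N.
Qed.
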